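(* For every single-player extensive-form game $\Gamma$, $\mathrm{VoR}^{\mathrm{SC}}(\Gamma)\ge1$ for each $\mathrm{SC}\in\{\mathrm{wCDTNash},\mathrm{bCDTNash},\mathrm{wEDTNash},\mathrm{bEDTNash}\}$.
   Context: A single-player extensive-form game consists of a finite rooted tree (nodes $\mathcal H$, leaves $\mathcal Z$, actions $A_h$), nonterminal nodes belonging to Player 1 or chance (fixed distributions), utility $u_1:\mathcal Z\to\mathbb R_{\ge0}$, and a partition $\mathcal I_1$ of Player 1's nodes into infosets with common action sets $A_I$. For a node $h$, $\mathrm{obs}(h)$ is the sequence of (player, infoset, action) along the root-to-$h$ path (excluding $h$), and $\mathrm{obs}_1(h)$ its restriction to Player 1's entries. $\mathrm{pr}_1(\Gamma)$ has the same tree and utilities with each $I\in\mathcal I_1$ partitioned by $h\sim h'\iff\mathrm{obs}_1(h)=\mathrm{obs}_1(h')$. A behavioral strategy $\pi$ assigns $\pi(\cdot\mid I)\in\Delta(A_I)$; $\mathbb P(h\mid\pi)$ is the reach probability; $U_1(\pi)=\sum_z\mathbb P(z\mid\pi)u_1(z)$; $\pi^{I\mapsto\sigma}$ plays $\sigma$ at $I$ and $\pi$ elsewhere. EDT equilibrium: $\pi(\cdot\mid I)\in\arg\max_\sigma U_1(\pi^{I\mapsto\sigma})$ for all $I$. CDT equilibrium: $\pi$ is a KKT point of maximizing $U_1$ over $\prod_I\Delta(A_I)$. Let $I^{\mathrm{1st}}$ be nodes $h\in I$ with $I$ not appearing in $\mathrm{obs}(h)$, $\mathbb P(I\mid\pi)=\sum_{h\in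 I^{\mathrm{1st}}}\mathbb P(h\mid\pi)$, $\mathrm{Fr}(I\mid\pi)=\sum_{h\in I}\mathbb P(h\mid\pi)$, $U_1^{\mathrm{CDT}}(\sigma\mid\pi,I)=U_1(\pi)+\sum_{a\in A_I}(\sigma(a)-\pi(a\mid I))\partial U_1(\pi)/\partial\pi(a\mid I)$. $\pi$ is EDT-rational (resp. CDT-rational) if there are fully mixed $\pi^{(k)}\to\pi$ and $\varepsilon^{(k)}>0$, $\varepsilon^{(k)}\to0$, such that for all $k$, all $I$ with $\mathbb P(I\mid\pi^{(k)})>0$ (resp. $\mathrm{Fr}(I\mid\pi^{(k)})>0$), and all $\sigma\in\Delta(A_I)$: $(U_1(\pi^{(k),I\mapsto\sigma})-U_1(\pi^{(k)}))/\mathbb P(I\mid\pi^{(k)})\le\varepsilon^{(k)}$ (resp. $(U_1^{\mathrm{CDT}}(\sigma\mid\pi^{(k)},I)-U_1(\pi^{(k)}))/\mathrm{Fr}(I\mid\pi^{(k)})\le\varepsilon^{(k)}$). An EDT-Nash (resp. CDT-Nash) equilibrium is an EDT (resp. CDT) equilibrium realization-equivalent (same reach probabilities at all nodes) to an EDT-rational (resp. CDT-rational) strategy. $u_1(\mathrm{bX}(\cdot))$ / $u_1(\mathrm{wX}(\cdot))$ is the max / min of $U_1$ over X equilibria; $\mathrm{VoR}^{\mathrm{SC}}(\Gamma)=u_1(\mathrm{SC}(\mathrm{pr}_1(\Gamma)))/u_1(\mathrm{SC}(\Gamma))$. *)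

(* Defs.v *)
From HB Require Import structures.
From mathcomp Require Import all_boot all_order all_algebra.
From mathcomp Require Import boolp classical_sets reals ereal topology normedtype sequences derive.
Set Implicit Arguments. Unset Strict Implicit. Unset Printing Implicit Defensive.
Import Order.TTheory GRing.Theory Num.Theory numFieldNormedType.Exports.
Local Open Scope ring_scope.
Local Open Scope classical_set_scope.


(** Nodes are histories (sequences of actions from a finite label type [A]);
   the tree is a finite prefix-closed list of histories containing the root [::]. *)

Definition acts {A : finType} (H : seq (seq A)) (h : seq A) : {set A} :=
  [set a | rcons h a \in H].
Definition nonterm {A : finType} (H : seq (seq A)) (h : seq A) : bool :=
  (h \in H) && (acts H h != finset.set0).
Definition leaf {A : finType} (H : seq (seq A)) (h : seq A) : bool :=
  (h \in H) && (acts H h == finset.set0).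

(** Infosets of Player 1 are given by a labelling [info] (labels in an eqType [I]):
    two Player-1 nodes are in the same infoset iff they have the same label. *)
Record efg (A : finType) (I : eqType) (R : realType) := EFG {
  nodes : seq (seq A);
  nodes_uniq : uniq nodes;
  root_in : [::] \in nodes;
  prefix_closed : forall h a, rcons h a \in nodes -> h \in nodes;
  owner : seq A -> bool;  (* true: Player 1, false: chance *)
  chance : seq A -> A -> R;
  chance_ge0 : forall h a, nonterm nodes h -> ~~ owner h ->
                 a \in acts nodes h -> 0 <= chance h a;
  chance_sum1 : forall h, nonterm nodes h -> ~~ owner h ->
                 \sum_(a in acts nodes h) chance h a = 1;
  util : seq A -> R;
  util_ge0 : forall z, leaf nodes z -> 0 <= util z;
  info : seq A -> I;
  info_acts : forall h h', nonterm nodes h -> owner h -> nonterm nodes h' ->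
                 owner h' -> info h = info h' -> acts nodes h = acts nodes h'
}.

Arguments nodes {A I R}. Arguments owner {A I R}. Arguments chance {A I R}.
Arguments util {A I R}. Arguments info {A I R}.

Section Game.
Context {A : finType} {I : eqType} {R : realType}.
Implicit Types (G : efg A I R) (pi : I -> A -> R).

Definition p1node G (h : seq A) : bool := nonterm (nodes G) h && owner G h.

Definition dist (S : {set A}) (s : A -> R) : Prop :=
  (forall a, a \in S -> 0 <= s a) /\ \sum_(a in S) s a = 1.

(** behavioral strategies: pi J a = pi(a | J) *)
Definition valid G pi : Prop :=
  forall h, p1node G h -> dist (acts (nodes G) h) (pi (info G h)).
Definition fully_mixed G pi : Prop :=
  valid G pi /\
  forall h a, p1node G h -> a \in acts (nodes G) h -> 0 < pi (info G h) a.

Definition step G pi (g : seq A) (a : A) : R :=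
  if owner G g then pi (info G g) a else chance G g a.
Fixpoint reach_from G pi (g rest : seq A) : R :=
  match rest with
  | [::] => 1
  | a :: r => step G pi g a * reach_from G pi (rcons g a) r
  end.
Definition reach G pi (h : seq A) : R := reach_from G pi [::] h.

Definition U G pi : R :=
  \sum_(z <- nodes G | leaf (nodes G) z) reach G pi z * util G z.

Definition subst pi (J : I) (s : A -> R) : I -> A -> R :=
  fun J' => if J' == J then s else pi J'.

Definition dU G pi (J : I) (a : A) : R :=
  derive1 (fun t : R => U G (subst pi J (fun b => if b == a then t else pi J b)))
          (pi J a).

Definition EDT_eq G pi : Prop :=
  valid G pi /\
  forall h, p1node G h -> forall s, dist (acts (nodes G) h) s ->
    U G (subst pi (info G h) s) <= U G pi.

(** KKT point of maximizing U over the product of simplices *)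
Definition CDT_eq G pi : Prop :=
  valid G pi /\
  exists (lam : I -> R) (mu : I -> A -> R),
    forall h, p1node G h -> forall a, a \in acts (nodes G) h ->
      [/\ 0 <= mu (info G h) a, mu (info G h) a * pi (info G h) a = 0 &
          dU G pi (info G h) a + mu (info G h) a - lam (info G h) = 0].

Definition first_in G (J : I) (h : seq A) : bool :=
  [&& p1node G h, info G h == J &
      [forall i : 'I_(size h),
         ~~ (p1node G (take i h) && (info G (take i h) == J))]].

Definition PI G pi (J : I) : R :=
  \sum_(h <- nodes G | first_in G J h) reach G pi h.
Definition Fr G pi (J : I) : R :=
  \sum_(h <- nodes G | p1node G h && (info G h == J)) reach G pi h.

Definition UCDT G pi (J : I) (S : {set A}) (s : A -> R) : R :=
  U G pi + \sum_(a in S) (s a - pi J a) * dU G pi J a.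

Definition converges G (pik : nat -> I -> A -> R) pi : Prop :=
  forall h a, p1node G h -> a \in acts (nodes G) h ->
    (fun k => pik k (info G h) a) @ \oo --> pi (info G h) a.

Definition EDT_rational G pi : Prop :=
  exists (pik : nat -> I -> A -> R) (eps : nat -> R),
    [/\ forall k, fully_mixed G (pik k),
        forall k, 0 < eps k,
        eps @ \oo --> 0,
        converges G pik pi &
        forall k h, p1node G h -> 0 < PI G (pik k) (info G h) ->
          forall s, dist (acts (nodes G) h) s ->
            (U G (subst (pik k) (info G h) s) - U G (pik k))
              / PI G (pik k) (info G h) <= eps k].

Definition CDT_rational G pi : Prop :=
  exists (pik : nat -> I -> A -> R) (eps : nat -> R),
    [/\ forall k, fully_mixed G (pik k),
        forall k, 0 < eps k,
        eps @ \oo --> 0,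
        converges G pik pi &
        forall k h, p1node G h -> 0 < Fr G (pik k) (info G h) ->
          forall s, dist (acts (nodes G) h) s ->
            (UCDT G (pik k) (info G h) (acts (nodes G) h) s - U G (pik k))
              / Fr G (pik k) (info G h) <= eps k].

Definition realization_equiv G pi pi' : Prop :=
  forall h, h \in nodes G -> reach G pi h = reach G pi' h.

Definition EDT_Nash G pi : Prop :=
  EDT_eq G pi /\ exists pi', realization_equiv G pi pi' /\ EDT_rational G pi'.
Definition CDT_Nash G pi : Prop :=
  CDT_eq G pi /\ exists pi', realization_equiv G pi pi' /\ CDT_rational G pi'.

Definition eq_values G (P : efg A I R -> (I -> A -> R) -> Prop) : set R :=
  [set r | exists pi, P G pi /\ U G pi = r]%classic.

Fixpoint obs1_from G (g rest : seq A) : seq (I * A) :=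
  match rest with
  | [::] => [::]
  | a :: r => if p1node G g then (info G g, a) :: obs1_from G (rcons g a) r
              else obs1_from G (rcons g a) r
  end.
Definition obs1 G (h : seq A) : seq (I * A) := obs1_from G [::] h.

End Game.

(** pr_1(Gamma): same tree, infosets refined by obs_1 *)
Definition pr1 {A : finType} {I : eqType} {R : realType} (G : efg A I R)
  : efg A (I * seq (I * A))%type R.
Proof.
refine (@EFG A (I * seq (I * A))%type R (nodes G) (nodes_uniq G) (root_in G)
  (@prefix_closed _ _ _ G) (owner G) (chance G) (@chance_ge0 _ _ _ G)
  (@chance_sum1 _ _ _ G) (util G) (@util_ge0 _ _ _ G)
  (fun h => (info G h, obs1 G h)) _).
move=> h h' nh oh nh' oh' [e _]; exact: info_acts e.
Defined.

Inductive SC := wCDTNash | bCDTNash | wEDTNash | bEDTNash.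

Definition sc_value (c : SC) {A : finType} {I : eqType} {R : realType}
  (G : efg A I R) : R :=
  match c with
  | wCDTNash => inf (eq_values G (fun G' pi => CDT_Nash G' pi))
  | bCDTNash => sup (eq_values G (fun G' pi => CDT_Nash G' pi))
  | wEDTNash => inf (eq_values G (fun G' pi => EDT_Nash G' pi))
  | bEDTNash => sup (eq_values G (fun G' pi => EDT_Nash G' pi))
  end.

(** VoR^SC(G) = u(SC(pr1 G)) / u(SC(G)), in the extended reals with the
    conventions x/0 = +oo for x <> 0 and 0/0 = 1. *)
Definition VoR (c : SC) {A : finType} {I : eqType} {R : realType}
  (G : efg A I R) : \bar R :=
  let a := sc_value c (pr1 G) in
  let b := sc_value c G in
  if b == 0 then (if a == 0 then 1%E else +oo%E) else (a / b)%:E.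

(* Main.v *)
Require Import Defs.
From HB Require Import structures.
From mathcomp Require Import all_boot all_order all_algebra.
From mathcomp Require Import boolp functions classical_sets reals ereal topology normedtype sequences derive.
From mathcomp Require Import ring lra zify.
Set Implicit Arguments. Unset Strict Implicit. Unset Printing Implicit Defensive.
Import Order.TTheory GRing.Theory Num.Theory numFieldNormedType.Exports.

Module P1.
Set Implicit Arguments. Unset Strict Implicit. Unset Printing Implicit Defensive.
Local Open Scope ring_scope.

Lemma sum_seq_pred1 (R : realType) (T : eqType) (s : seq T) (c : T) (F : T -> R) :
  uniq s -> c \in s -> \sum_(j <- s | j == c) F j = F c.
Proof.
move=> us cs; rewrite (eq_bigr (fun _ => F c)) => [|j /eqP->//].
rewrite big_const_seq.
have -> : count (fun j => j == c) s = 1%N.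
  have := count_uniq_mem c us; rewrite cs /= => <-; apply: eq_count => j /=.
  by rewrite eq_sym.
by rewrite /= addr0.
Qed.

Lemma psum_seq_eq0 (R : realType) (T : eqType) (s : seq T) (P : pred T) (F : T -> R) :
  (forall i, i \in s -> P i -> 0 <= F i) -> \sum_(i <- s | P i) F i = 0 ->
  forall i, i \in s -> P i -> F i = 0.
Proof.
elim: s => // a s IH H; rewrite big_cons.
have Hs : forall i, i \in s -> P i -> 0 <= F i by move=> i iS Pi; apply: H => //; rewrite inE iS orbT.
have s0 : 0 <= \sum_(i <- s | P i) F i by rewrite big_seq_cond; apply: sumr_ge0 => i /andP[??]; apply: Hs.
case: ifP => Pa.
- have Fa0 : 0 <= F a by apply: H => //; rewrite inE eqxx.
  move=> E.
  have [Fa Fs] : F a = 0 /\ \sum_(i <- s | P i) F i = 0 by split; lra.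
  move=> i; rewrite inE => /orP[/eqP->//|iS Pi]; exact: IH.
- move=> E i; rewrite inE => /orP[/eqP-> |iS Pi]; first by rewrite Pa.
  exact: IH.
Qed.

Lemma dist_le1 (A : finType) (R : realType) (S : {set A}) (s : A -> R) a :
  dist S s -> a \in S -> s a <= 1.
Proof.
move=> [s0 s1] aS; rewrite -s1 (bigD1 a) //= lerDl.
by apply: sumr_ge0 => i /andP[iS _]; apply: s0.
Qed.

Section Game1.
Variables (A : finType) (I : eqType) (R : realType) (G : efg A I R).
Local Notation G1 := (pr1 G).
Local Notation N := (nodes G).
Definition I1 := (I * seq (I * A))%type.
Definition lab (h : seq A) : I1 := (info G h, obs1 G h).
Implicit Types (x y : I1 -> A -> R).

Lemma nodes_pr1 : nodes G1 = N. Proof. by []. Qed.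
Lemma p1node_pr1 h : p1node G1 h = p1node G h. Proof. by []. Qed.
Lemma info_pr1 h : info G1 h = lab h. Proof. by []. Qed.
Lemma step_pr1 x g a : step G1 x g a = if owner G g then x (lab g) a else chance G g a.
Proof. by []. Qed.

Lemma cat_in g r : g ++ r \in N -> g \in N.
Proof.
elim/last_ind: r => [|r a IH]; first by rewrite cats0.
by rewrite -rcons_cat => /prefix_closed; exact: IH.
Qed.

Lemma take_in z i : z \in N -> take i z \in N.
Proof. by move=> zN; apply: (@cat_in _ (drop i z)); rewrite cat_take_drop. Qed.

Lemma cons_nonterm g a r : g ++ a :: r \in N -> nonterm N g /\ a \in acts N g.
Proof.
move=> H.
have Ha : rcons g a \in N by apply: (@cat_in _ r); rewrite cat_rcons.
have aa : a \in acts N g by rewrite inE.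
split => //; rewrite /nonterm (prefix_closed Ha) /=.
by apply/set0Pn; exists a.
Qed.

Lemma cons_p1 g a r : g ++ a :: r \in N -> owner G g -> p1node G g.
Proof. by move=> /cons_nonterm [nt _] o; rewrite /p1node nt o. Qed.

Lemma rf_cat x g r1 r2 :
  reach_from G1 x g (r1 ++ r2) = reach_from G1 x g r1 * reach_from G1 x (g ++ r1) r2.
Proof.
elim: r1 g => [|a r1 IH] g /=; first by rewrite mul1r cats0.
by rewrite IH mulrA cat_rcons.
Qed.

Lemma rf_eq x y g r :
  (forall i, (i < size r)%N -> owner G (g ++ take i r) ->
     x (lab (g ++ take i r)) = y (lab (g ++ take i r))) ->
  reach_from G1 x g r = reach_from G1 y g r.
Proof.
elim: r g => [|a r IH] g H //=.
congr (_ * _).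
  rewrite !step_pr1; case: ifP => // o.
  by move: (H 0%N erefl); rewrite take0 cats0 => ->.
apply: IH => i ir; rewrite cat_rcons => o.
exact: (H i.+1 ir o).
Qed.

Lemma rf_bounds x g r : valid G1 x -> g ++ r \in N ->
  0 <= reach_from G1 x g r <= 1.
Proof.
move=> vx; elim: r g => [|a r IH] g /=; first by rewrite ler01 lexx.
move=> H; have [nt aa] := cons_nonterm H.
have /IH /andP[r0 r1] : rcons g a ++ r \in N by rewrite cat_rcons.
have /andP[s0 s1] : 0 <= step G1 x g a <= 1.
  rewrite step_pr1; case: ifP => o.
    have p1 : p1node G g by rewrite /p1node nt o.
    have := vx g p1 => D.
    by rewrite (proj1 D) //= (dist_le1 D).
  have no : ~~ owner G g by rewrite o.
  have Hc := chance_ge0 nt no aa.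
  rewrite Hc /=; rewrite -(chance_sum1 nt no) (bigD1 a) //= lerDl.
  by apply: sumr_ge0 => i /andP[iS _]; apply: chance_ge0.
apply/andP; split; first exact: mulr_ge0.
by rewrite -(mulr1 1); apply: ler_pM.
Qed.

End Game1.

End P1.
Import P1.

Module P2.
Set Implicit Arguments. Unset Strict Implicit. Unset Printing Implicit Defensive.
Local Open Scope ring_scope.

Section Game2.
Variables (A : finType) (I : eqType) (R : realType) (G : efg A I R).
Local Notation G1 := (pr1 G).
Local Notation N := (nodes G).
Local Notation lab := (@lab A I R G).
Implicit Types (x y : I1 A I -> A -> R).

Lemma obs1_from_cat g r1 r2 :
  obs1_from G g (r1 ++ r2) = obs1_from G g r1 ++ obs1_from G (g ++ r1) r2.
Proof.
elim: r1 g => [|a r1 IH] g /=; first by rewrite cats0.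
by case: ifP => _; rewrite IH cat_rcons.
Qed.

Lemma obs1_cat g r : obs1 G (g ++ r) = obs1 G g ++ obs1_from G g r.
Proof. by rewrite /obs1 obs1_from_cat. Qed.

Lemma obs_le g r : (size (obs1 G g) <= size (obs1 G (g ++ r)))%N.
Proof. by rewrite obs1_cat size_cat leq_addr. Qed.

Lemma obs_lt g a r : p1node G g -> (size (obs1 G g) < size (obs1 G (g ++ a :: r)))%N.
Proof. by move=> p; rewrite obs1_cat size_cat /= p /= addnS ltnS leq_addr. Qed.

Lemma obs1_from_size g r : (size (obs1_from G g r) <= size r)%N.
Proof. elim: r g => [|a r IH] g //=; case: ifP => _ /=; [rewrite ltnS|apply: leqW]; exact: IH. Qed.

Lemma obs_size h : (size (obs1 G h) <= size h)%N.
Proof. exact: obs1_from_size. Qed.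



Lemma split_at (z : seq A) i (a0 : A) : (i < size z)%N -> z = take i z ++ nth a0 z i :: drop i.+1 z.
Proof. by move=> iz; rewrite -drop_nth // cat_take_drop. Qed.

Lemma path_p1 g r i : g ++ r \in N -> (i < size r)%N -> owner G (g ++ take i r) ->
  p1node G (g ++ take i r).
Proof.
move=> H ir; case: r H ir => // a0 r' H ir.
apply: (@cons_p1 _ _ _ G _ (nth a0 (a0 :: r') i) (drop i.+1 (a0 :: r'))).
by rewrite -catA /= -split_at.
Qed.

Lemma take_lt_obs (z : seq A) i : (i < size z)%N -> p1node G (take i z) ->
  (size (obs1 G (take i z)) < size (obs1 G z))%N.
Proof.
case: z => // a0 z' iz p; rewrite {2}(split_at a0 iz); exact: obs_lt.
Qed.

Lemma take_lt_obs2 (z : seq A) i j : (i < j)%N -> (j <= size z)%N -> p1node G (take i z) ->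
  (size (obs1 G (take i z)) < size (obs1 G (take j z)))%N.
Proof.
move=> ij jz p.
have -> : take i z = take i (take j z) by rewrite take_takel // ltnW.
apply: take_lt_obs; first by rewrite size_takel.
by rewrite take_takel // ltnW.
Qed.

Lemma reach_lt x y h : h \in N ->
  (forall L : I1 A I, (size L.2 < size (obs1 G h))%N -> x L = y L) ->
  reach G1 x h = reach G1 y h.
Proof.
move=> hN H; apply: rf_eq => i ih o.
have p := path_p1 (g:=[::]) hN ih o.
apply: H; exact: take_lt_obs.
Qed.

Definition pref (p z : seq A) := take (size p) z == p.
Definition sp (h z : seq A) := (size h < size z)%N && pref h z.

Definition Q x h a := \sum_(z <- N | leaf N z && pref (rcons h a) z)
   reach_from G1 x (rcons h a) (drop (size h).+1 z) * util G z.

Lemma prefix_cat p z : pref p z -> z = p ++ drop (size p) z.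
Proof. by rewrite /pref => /eqP E; rewrite -{1}E cat_take_drop. Qed.

Lemma prefix_rcons_cat h a z : pref (rcons h a) z -> z = h ++ a :: drop (size h).+1 z.
Proof. by move=> /prefix_cat; rewrite size_rcons -cat_rcons. Qed.

Lemma Q_eq x y h a : p1node G h ->
  (forall L : I1 A I, (size (obs1 G h) < size L.2)%N -> x L = y L) ->
  Q x h a = Q y h a.
Proof.
move=> ph H; rewrite /Q big_seq_cond [RHS]big_seq_cond; apply: eq_bigr => z /andP[zN /andP[lz pz]].
congr (_ * _); apply: rf_eq => i ir o.
have zz := prefix_rcons_cat pz.
have p : p1node G (rcons h a ++ take i (drop (size h).+1 z)).
  apply: path_p1 => //; by rewrite cat_rcons -zz.
apply: H; rewrite /= cat_rcons; exact: obs_lt.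
Qed.

Lemma Q_ge0 x h a : valid G1 x -> 0 <= Q x h a.
Proof.
move=> vx; rewrite /Q big_seq_cond; apply: sumr_ge0 => z /andP[zN /andP[lz pz]].
apply: mulr_ge0; last exact: util_ge0.
have Hz : rcons h a ++ drop (size h).+1 z \in N by rewrite cat_rcons -prefix_rcons_cat.
by have /andP[] := rf_bounds vx Hz.
Qed.

Definition Usum := \sum_(z <- N | leaf N z) util G z.

Lemma Q_le x h a : valid G1 x -> Q x h a <= Usum.
Proof.
move=> vx; rewrite /Q /Usum.
apply: (@le_trans _ _ (\sum_(z <- N | leaf N z && pref (rcons h a) z) util G z)).
  rewrite big_seq_cond [X in _ <= X]big_seq_cond; apply: ler_sum => z /andP[zN /andP[lz pz]].
  have Hz : rcons h a ++ drop (size h).+1 z \in N by rewrite cat_rcons -prefix_rcons_cat.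
  have /andP[r0 r1] := rf_bounds vx Hz.
  by rewrite -[X in _ <= X]mul1r ler_wpM2r // util_ge0.
rewrite [X in _ <= X](bigID (fun z => pref (rcons h a) z)) /= lerDl.
rewrite big_seq_cond; apply: sumr_ge0 => z /andP[zN /andP[lz pz]]; exact: util_ge0.
Qed.

End Game2.

End P2.
Import P2.

Module P3.
Set Implicit Arguments. Unset Strict Implicit. Unset Printing Implicit Defensive.
Local Open Scope ring_scope.

Section Game3.
Variables (A : finType) (I : eqType) (R : realType) (G : efg A I R).
Local Notation G1 := (pr1 G).
Local Notation N := (nodes G).
Local Notation lab := (@lab A I R G).
Local Notation Q := (@Q A I R G).
Implicit Types (x y : I1 A I -> A -> R).

Variables (S : pred (seq A)) (n : nat).
Hypothesis HS : forall h, S h -> p1node G h && (size (obs1 G h) == n).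

Definition hasS (z : seq A) := [exists i : 'I_(size z), S (take i z)].

Lemma uniqS z i j : S (take i z) -> S (take j z) -> (i < size z)%N -> (j < size z)%N -> i = j.
Proof.
move=> Si Sj iz jz.
have [lt|gt|//] := ltngtP i j.
- have /andP[p1 /eqP e1] := HS Si; have /andP[_ /eqP e2] := HS Sj.
  have := take_lt_obs2 lt (ltnW jz) p1; by rewrite e1 e2 ltnn.
- have /andP[_ /eqP e1] := HS Si; have /andP[p1 /eqP e2] := HS Sj.
  have := take_lt_obs2 gt (ltnW iz) p1; by rewrite e1 e2 ltnn.
Qed.

Lemma split_leaves (F : seq A -> R) :
  \sum_(z <- N | leaf N z && hasS z) F z =
  \sum_(h <- N | S h) \sum_(z <- N | leaf N z && sp h z) F z.
Proof.
under [RHS]eq_bigr => h _ do rewrite big_mkcondr.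
rewrite exchange_big /= big_mkcondr /=.
rewrite big_seq_cond [RHS]big_seq_cond; apply: eq_bigr => z /andP[zN lz].
case: ifP => hz.
- have /existsP[i0 Si0] := hz.
  rewrite -big_mkcondr /=.
  rewrite (@eq_bigl _ _ _ _ _ _ (fun h => h == take i0 z)); last first.
    move=> h; apply/idP/idP.
      move=> /andP[Sh /andP[hsz /eqP ph]].
      have e : size h = i0.
        apply: (uniqS (z := z)) => //; by rewrite ?ph.
      by rewrite -ph e.
    move=> /eqP ->; rewrite Si0 /sp /pref size_takel ?ltn_ord ?eqxx //.
    exact: ltnW.
  by rewrite (@sum_seq_pred1 _ _ _ _ (fun _ => F z)) ?nodes_uniq ?take_in.
- apply/esym/big1 => h Sh; rewrite /sp; case: ifP => // /andP[hsz ph].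
  move/negbT: hz => /existsPn /(_ (Ordinal hsz)) /=.
  by rewrite (eqP ph) Sh.
Qed.

Lemma split_next h (F : seq A -> R) :
  \sum_(z <- N | leaf N z && sp h z) F z =
  \sum_(a in acts N h) \sum_(z <- N | leaf N z && pref (rcons h a) z) F z.
Proof.
have -> : \sum_(a in acts N h) \sum_(z <- N | leaf N z && pref (rcons h a) z) F z =
          \sum_(a : A) \sum_(z <- N | leaf N z && pref (rcons h a) z) F z.
  rewrite [RHS](bigID (fun a => a \in acts N h)) /= [X in _ + X]big1 ?addr0 //.
  move=> a aN; rewrite big_seq_cond big1 // => z /andP[zN /andP[_ pz]].
  have : rcons h a \in N by move: pz; rewrite /pref => /eqP <-; exact: take_in.
  by move: aN; rewrite inE => /negbTE ->.
under [RHS]eq_bigr => a _ do rewrite big_mkcondr.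
rewrite exchange_big /= big_mkcondr /=; apply: eq_bigr => z lz.
case: z lz => [|z0 z'] lz.
  by rewrite /sp /= big1 // => a _; rewrite /pref /= eq_sym; case: h.
set z := z0 :: z'.
have key : forall a, pref (rcons h a) z = sp h z && (a == nth z0 z (size h)).
  move=> a; rewrite /sp /pref size_rcons.
  case: ltnP => hz.
    by rewrite (take_nth z0 hz) eqseq_rcons [a == _]eq_sym.
  rewrite take_oversize /=; last exact: (leqW hz).
  by apply/negbTE/eqP => e; move: hz; rewrite e size_rcons ltnn.
rewrite (eq_bigr (fun a => if sp h z && (a == nth z0 z (size h)) then F z else 0)); last first.
  by move=> a _; rewrite key.
case: (sp h z) => /=; last by rewrite big1.
by rewrite -big_mkcond big_pred1_eq.
Qed.

Lemma decomp x :
  U G1 x = \sum_(z <- N | leaf N z && ~~ hasS z) reach G1 x z * util G z +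
           \sum_(h <- N | S h) reach G1 x h * \sum_(a in acts N h) x (lab h) a * Q x h a.
Proof.
rewrite /U /= (bigID hasS) /= addrC; congr (_ + _).
rewrite split_leaves big_seq_cond [RHS]big_seq_cond; apply: eq_bigr => h /andP[hN Sh].
have /andP[ph _] := HS Sh.
have oh : owner G h by move: ph => /andP[].
rewrite split_next mulr_sumr; apply: eq_bigr => a aa.
rewrite /Q !mulr_sumr big_seq_cond [RHS]big_seq_cond; apply: eq_bigr => z /andP[zN /andP[lz pz]].
by rewrite {1}(prefix_rcons_cat pz) /reach rf_cat /= step_pr1 oh !mulrA.
Qed.

Lemma switch x y :
  (forall L : I1 A I, size L.2 != n -> x L = y L) ->
  (forall g, p1node G g -> ~~ S g -> x (lab g) = y (lab g)) ->
  U G1 y - U G1 x = \sum_(h <- N | S h) reach G1 x h *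
      \sum_(a in acts N h) (y (lab h) a - x (lab h) a) * Q x h a.
Proof.
move=> Hoff Hag.
rewrite (decomp x) (decomp y).
have -> : \sum_(z <- N | leaf N z && ~~ hasS z) reach G1 y z * util G z =
          \sum_(z <- N | leaf N z && ~~ hasS z) reach G1 x z * util G z.
  rewrite big_seq_cond [RHS]big_seq_cond; apply: eq_bigr => z /andP[zN /andP[lz hz]].
  congr (_ * _); apply: rf_eq => i iz o.
  have p := path_p1 (g := [::]) zN iz o.
  apply/esym/Hag => //; apply/negP => Si; move/existsPn: hz => /(_ (Ordinal iz)) /=.
  by rewrite Si.
have E : forall a b c : R, a + b - (a + c) = b - c by move=> *; ring.
rewrite E -sumrB big_seq_cond [RHS]big_seq_cond; apply: eq_bigr => h /andP[hN Sh].
have /andP[ph /eqP sh] := HS Sh.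
have -> : reach G1 y h = reach G1 x h.
  apply: reach_lt => // L; rewrite sh => Ln; apply/esym/Hoff; by rewrite neq_ltn Ln.
rewrite -mulrBr; congr (_ * _); rewrite -sumrB; apply: eq_bigr => a _.
rewrite (@Q_eq A I R G y x h a ph); last first.
  move=> L; rewrite sh => Ln; apply/esym/Hoff; by rewrite neq_ltn Ln orbT.
by rewrite mulrBl.
Qed.

End Game3.

End P3.
Import P3.

Module P4.
Set Implicit Arguments. Unset Strict Implicit. Unset Printing Implicit Defensive.
Local Open Scope ring_scope.

Lemma der_aff (R : realType) (al be C x : R) :
  derive1 (fun t : R => al + (t - be) * C) x = C.
Proof.
rewrite derive1E.
have H : is_derive x (1:R) (cst (al - be * C) + C \*: (@id R)) (0 + C *: 1).
  by apply: is_deriveD.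
have -> : (fun t : R => al + (t - be) * C) = (cst (al - be * C) + C \*: (@id R)).
  by apply: funext => t; rewrite !fctE /= [C *: t]/GRing.scale /=; ring.
by rewrite derive_val add0r /GRing.scale /= mulr1.
Qed.

Lemma sum_nat_pick (R : realType) (M k : nat) (c : R) : (k < M)%N ->
  \sum_(0 <= m < M) (if k == m then c else 0) = c.
Proof.
elim: M => // M IH; rewrite ltnS leq_eqVlt => /orP[/eqP->|kM].
  rewrite big_nat_recr //= eqxx big1_seq ?add0r // => m /andP[_].
  by rewrite mem_index_iota => /andP[_ mM]; rewrite gtn_eqF.
by rewrite big_nat_recr //= IH // ltn_eqF // addr0.
Qed.

Section Game4.
Variables (A : finType) (I : eqType) (R : realType) (G : efg A I R).
Local Notation G1 := (pr1 G).
Local Notation N := (nodes G).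
Local Notation lab := (@lab A I R G).
Local Notation Q := (@Q A I R G).
Implicit Types (x y : I1 A I -> A -> R).

Definition SJ (J : I1 A I) h := p1node G h && (lab h == J).
Definition C x J a := \sum_(h <- N | SJ J h) reach G1 x h * Q x h a.

Lemma HS_J J h : SJ J h -> p1node G h && (size (obs1 G h) == size J.2).
Proof. by rewrite /SJ => /andP[p /eqP e]; rewrite p -e /= eqxx. Qed.

Lemma acts_lab h h' : p1node G h -> p1node G h' -> lab h = lab h' -> acts N h = acts N h'.
Proof.
move=> /andP[n1 o1] /andP[n2 o2] [e _]; exact: info_acts.
Qed.

Lemma L_lin x h0 s : p1node G h0 ->
  U G1 (subst x (lab h0) s) - U G1 x =
  \sum_(a in acts N h0) (s a - x (lab h0) a) * C x (lab h0) a.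
Proof.
move=> p0; set J := lab h0.
rewrite (@switch A I R G (SJ J) (size J.2) (@HS_J J)); first last.
- move=> g pg; rewrite /SJ pg /= /subst => /negbTE ->; by [].
- move=> L LJ; rewrite /subst; case: eqP => // e; by move: LJ; rewrite e eqxx.
under [RHS]eq_bigr => a _ do rewrite /C mulr_sumr.
rewrite exchange_big /= big_seq_cond [RHS]big_seq_cond; apply: eq_bigr => h /andP[hN /andP[ph /eqP lh]].
rewrite mulr_sumr (acts_lab ph p0 lh) /subst lh eqxx; apply: eq_bigr => a _; ring.
Qed.

Lemma dU_eq x h0 a : p1node G h0 -> a \in acts N h0 ->
  dU G1 x (lab h0) a = C x (lab h0) a.
Proof.
move=> p0 aa; rewrite /dU.
set J := lab h0.
have -> : (fun t => U G1 (subst x J (fun b => if b == a then t else x J b))) =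
          (fun t => U G1 x + (t - x J a) * C x J a).
  apply: funext => t; move: (L_lin x (fun b => if b == a then t else x J b) p0).
  rewrite (bigD1 a) //= eqxx big1 ?addr0; last first.
    by move=> b /andP[_ /negbTE ->]; rewrite subrr mul0r.
  by move/eqP; rewrite subr_eq => /eqP ->; rewrite addrC.
exact: der_aff.
Qed.

Lemma UCDT_eq x h0 s : p1node G h0 ->
  UCDT G1 x (lab h0) (acts (nodes G1) h0) s - U G1 x = U G1 (subst x (lab h0) s) - U G1 x.
Proof.
move=> p0; rewrite L_lin // /UCDT addrC addKr.
by apply: eq_bigr => a aa; rewrite dU_eq.
Qed.

Lemma U_eqall x y : (forall g, p1node G g -> x (lab g) = y (lab g)) -> U G1 x = U G1 y.
Proof.
move=> H; rewrite /U big_seq_cond [RHS]big_seq_cond; apply: eq_bigr => z /andP[zN _].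
congr (_ * _); apply: rf_eq => i iz o.
apply: H; exact: (path_p1 (g := [::]) zN iz o).
Qed.

Lemma perf_diff x tau :
  U G1 tau - U G1 x = \sum_(h <- N | p1node G h) reach G1 tau h *
     \sum_(a in acts N h) (tau (lab h) a - x (lab h) a) * Q x h a.
Proof.
pose rho (m : nat) := fun L : I1 A I => if (size L.2 < m)%N then tau L else x L.
pose M := (\max_(h <- N) size h).+1.
have -> : U G1 tau = U G1 (rho M).
  apply: U_eqall => g /andP[/andP[gN _] _]; rewrite /rho /=.
  have -> // : (size (obs1 G g) < M)%N.
  rewrite ltnS; apply: leq_trans (obs_size G g) _.
  exact: (@leq_bigmax_seq _ N xpredT size g gN).
have -> : U G1 x = U G1 (rho 0%N) by apply: U_eqall.
rewrite -(telescope_sumr (fun m => U G1 (rho m)) (leq0n M)).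
have step : forall m, U G1 (rho m.+1) - U G1 (rho m) =
   \sum_(h <- N | p1node G h && (size (obs1 G h) == m)) reach G1 tau h *
     \sum_(a in acts N h) (tau (lab h) a - x (lab h) a) * Q x h a.
  move=> m.
  have HSm : forall h, p1node G h && (size (obs1 G h) == m) -> p1node G h && (size (obs1 G h) == m) by [].
  have Hoff : forall L : I1 A I, size L.2 != m -> rho m L = rho m.+1 L.
    move=> L Lm; have e : (size L.2 <= m)%N = (size L.2 < m)%N by rewrite leq_eqVlt (negbTE Lm).
    by rewrite /rho ltnS e.
  rewrite (@switch A I R G _ m HSm); first last.
  - by move=> g pg; rewrite pg /= => ?; apply: Hoff.
  - exact: Hoff.
  rewrite big_seq_cond [RHS]big_seq_cond; apply: eq_bigr => h /andP[hN /andP[ph /eqP sh]].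
  have -> : reach G1 (rho m) h = reach G1 tau h.
    apply: reach_lt => // L; rewrite sh /rho => ->; by [].
  congr (_ * _); apply: eq_bigr => a _.
  rewrite /rho /= sh ltnn ltnSn; congr (_ * _).
  apply: Q_eq => // L; rewrite sh /rho => mL; by rewrite ltnNge ltnW.
pose F h := reach G1 tau h *
     \sum_(a in acts N h) (tau (lab h) a - x (lab h) a) * Q x h a.
rewrite (eq_bigr (fun m => \sum_(h <- N | p1node G h) (if size (obs1 G h) == m then F h else 0))); last first.
  by move=> m _ /=; rewrite (step m) big_mkcondr.
rewrite exchange_big /= big_seq_cond [RHS]big_seq_cond; apply: eq_bigr => h /andP[hN ph].
have hM : (size (obs1 G h) < M)%N.
  rewrite ltnS; apply: leq_trans (obs_size G h) _.
  exact: (@leq_bigmax_seq _ N xpredT size h hN).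
by rewrite sum_nat_pick.
Qed.

End Game4.

End P4.
Import P4.

Module P5.
Set Implicit Arguments. Unset Strict Implicit. Unset Printing Implicit Defensive.
Local Open Scope ring_scope.
Local Open Scope classical_set_scope.

Lemma cvg_ge_lim (R : realType) (a : nat -> R) (la x : R) :
  a @ \oo --> la -> (forall k, x <= a k) -> x <= la.
Proof.
move=> Ha H. have := @limr_ge _ _ _ R x a (cvgP _ Ha).
rewrite (cvg_lim _ Ha) //; apply; exact: nearW.
Qed.

Lemma cvg_sum_seq (R : realType) (T : eqType) (s : seq T) (P : pred T)
   (f : nat -> T -> R) (l : T -> R) :
  (forall t, t \in s -> P t -> (fun k => f k t) @ \oo --> l t) ->
  (fun k => \sum_(t <- s | P t) f k t) @ \oo --> \sum_(t <- s | P t) l t.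
Proof.
elim: s => [|t s IH] H.
  under eq_fun => k do rewrite big_nil. rewrite big_nil; exact: cvg_cst.
under eq_fun => k do rewrite big_cons. rewrite big_cons.
have Hs : (fun k => \sum_(t <- s | P t) f k t) @ \oo --> \sum_(t <- s | P t) l t.
  by apply: IH => u us Pu; apply: H => //; rewrite inE us orbT.
case: ifP => Pt; last exact: Hs.
apply: cvgD; [by apply: H => //; rewrite inE eqxx | exact: Hs].
Qed.

Section Game5.
Variables (A : finType) (I : eqType) (R : realType) (G : efg A I R).
Local Notation G1 := (pr1 G).
Local Notation N := (nodes G).
Local Notation lab := (@lab A I R G).
Local Notation Q := (@Q A I R G).
Local Notation SJ := (@SJ A I R G).
Implicit Types (x y : I1 A I -> A -> R).

Fixpoint chf (g r : seq A) : R :=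
  match r with [::] => 1 | a :: r' => (if owner G g then 1 else chance G g a) * chf (rcons g a) r' end.
Fixpoint ownf x (g r : seq A) : R :=
  match r with [::] => 1 | a :: r' => (if owner G g then x (lab g) a else 1) * ownf x (rcons g a) r' end.
Fixpoint Tobs x (pre o : seq (I * A)) : R :=
  match o with [::] => 1 | p :: o' => x (p.1, pre) p.2 * Tobs x (rcons pre p) o' end.

Lemma rf_split x g r : reach_from G1 x g r = chf g r * ownf x g r.
Proof.
elim: r g => [|a r IH] g /=; first by rewrite mulr1.
rewrite IH step_pr1; case: (owner G g); ring.
Qed.

Lemma ownf_obs x g r : g ++ r \in N -> ownf x g r = Tobs x (obs1 G g) (obs1_from G g r).
Proof.
elim: r g => [|a r IH] g //= H.
have [nt _] := cons_nonterm H.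
have H' : rcons g a ++ r \in N by rewrite cat_rcons.
have ob : obs1 G (rcons g a) = if p1node G g then rcons (obs1 G g) (info G g, a) else obs1 G g.
  by rewrite -cats1 obs1_cat /=; case: ifP => _; rewrite ?cats0 ?cats1.
rewrite (IH _ H') ob /p1node nt /=.
by case: (owner G g) => //=; rewrite mul1r.
Qed.

Lemma own_lab x h h' : h \in N -> h' \in N -> lab h = lab h' -> ownf x [::] h = ownf x [::] h'.
Proof.
move=> hN h'N [_ e].
rewrite (ownf_obs x (g:=[::]) hN) (ownf_obs x (g:=[::]) h'N).
by move: e; rewrite /obs1 => ->.
Qed.

Lemma chf_ge0 g r : g ++ r \in N -> 0 <= chf g r.
Proof.
elim: r g => [|a r IH] g //= H.
have [nt aa] := cons_nonterm H.
have H' : rcons g a ++ r \in N by rewrite cat_rcons.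
apply: mulr_ge0; last exact: IH.
case: ifP => o //; apply: chance_ge0 => //; by rewrite o.
Qed.

Lemma ownf_ge0 x g r : valid G1 x -> g ++ r \in N -> 0 <= ownf x g r.
Proof.
move=> vx; elim: r g => [|a r IH] g //= H.
have [nt aa] := cons_nonterm H.
have H' : rcons g a ++ r \in N by rewrite cat_rcons.
apply: mulr_ge0; last exact: IH.
case: ifP => o //.
have p : p1node G g by rewrite /p1node nt o.
exact: (proj1 (vx g p)).
Qed.

Lemma ownf_gt0 x g r : fully_mixed G1 x -> g ++ r \in N -> 0 < ownf x g r.
Proof.
move=> [_ fx]; elim: r g => [|a r IH] g //= H.
have [nt aa] := cons_nonterm H.
have H' : rcons g a ++ r \in N by rewrite cat_rcons.
apply: mulr_gt0; last exact: IH.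
case: ifP => o //.
have p : p1node G g by rewrite /p1node nt o.
exact: (fx g a p aa).
Qed.

Definition Ls := undup (map lab [seq h <- N | p1node G h]).

Lemma group_lab (F : seq A -> R) :
  \sum_(h <- N | p1node G h) F h = \sum_(J <- Ls) \sum_(h <- N | SJ J h) F h.
Proof.
rewrite (eq_bigr (fun J => \sum_(h <- N | p1node G h) (if lab h == J then F h else 0))); last first.
  by move=> J _; rewrite /P4.SJ big_mkcondr.
rewrite exchange_big /= big_seq_cond [RHS]big_seq_cond; apply: eq_bigr => h /andP[hN ph].
rewrite -big_mkcond /=.
rewrite (eq_bigl (fun J => J == lab h)); last by move=> J; rewrite eq_sym.
rewrite (@sum_seq_pred1 _ _ _ _ (fun _ => F h)) ?undup_uniq //.
by rewrite mem_undup map_f // mem_filter ph.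
Qed.

Lemma L_lin2 x h0 s : p1node G h0 ->
  U G1 (subst x (lab h0) s) - U G1 x =
  \sum_(h <- N | SJ (lab h0) h) reach G1 x h *
     \sum_(a in acts N h) (s a - x (lab h0) a) * Q x h a.
Proof.
move=> p0; set J := lab h0.
rewrite (@switch A I R G (SJ J) (size J.2) (@HS_J A I R G J)); first last.
- move=> g pg; rewrite /P4.SJ pg /= /subst => /negbTE ->; by [].
- move=> L LJ; rewrite /subst; case: eqP => // e; by move: LJ; rewrite e eqxx.
rewrite big_seq_cond [RHS]big_seq_cond; apply: eq_bigr => h /andP[hN /andP[ph /eqP lh]].
by rewrite /subst lh eqxx.
Qed.

Lemma Fr_eq x J : Fr G1 x J = \sum_(h <- N | SJ J h) reach G1 x h.
Proof. by []. Qed.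

Lemma ratR x tau eps : fully_mixed G1 x -> valid G1 tau -> 0 <= eps ->
  (forall h0, p1node G h0 -> 0 < Fr G1 x (lab h0) -> forall s, dist (acts N h0) s ->
     (U G1 (subst x (lab h0) s) - U G1 x) / Fr G1 x (lab h0) <= eps) ->
  U G1 tau - U G1 x <= eps * (size N)%:R.
Proof.
move=> fx vt e0 Hrat.
rewrite perf_diff group_lab.
apply: (@le_trans _ _ (\sum_(J <- Ls) eps * \sum_(h <- N | SJ J h) reach G1 tau h)).
  rewrite big_seq [X in _ <= X]big_seq; apply: ler_sum => J JL.
  move: JL; rewrite mem_undup => /mapP [h0]; rewrite mem_filter => /andP[p0 h0N] eJ.
  have h0N' : h0 \in N by [].
  pose ch h := chf [::] h.
  pose D s h := \sum_(a in acts N h) (s a - x J a) * Q x h a.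
  have rw : forall y, {in N, forall h, SJ J h -> reach G1 y h = ch h * ownf y [::] h0}.
    move=> y h hN /andP[ph /eqP lh]; rewrite /reach rf_split; congr (_ * _).
    by apply: own_lab => //; rewrite lh eJ.
  have E1 : \sum_(h <- N | SJ J h) reach G1 tau h *
       \sum_(a in acts N h) (tau (lab h) a - x (lab h) a) * Q x h a =
       ownf tau [::] h0 * \sum_(h <- N | SJ J h) ch h * D (tau J) h.
    rewrite mulr_sumr big_seq_cond [RHS]big_seq_cond; apply: eq_bigr => h /andP[hN Sh].
    rewrite (rw tau h hN Sh); move: Sh => /andP[_ /eqP ->]; rewrite /D; ring.
  have E2 : \sum_(h <- N | SJ J h) reach G1 tau h = ownf tau [::] h0 * \sum_(h <- N | SJ J h) ch h.
    rewrite mulr_sumr big_seq_cond [RHS]big_seq_cond; apply: eq_bigr => h /andP[hN Sh].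
    by rewrite (rw tau h hN Sh) mulrC.
  rewrite E1 E2 mulrCA; apply: ler_wpM2l; first by apply: ownf_ge0 => //; rewrite cat0s.
  have Tx0 : 0 < ownf x [::] h0 by apply: ownf_gt0.
  have Cs0 : 0 <= \sum_(h <- N | SJ J h) ch h.
    rewrite big_seq_cond; apply: sumr_ge0 => h /andP[hN _]; exact: chf_ge0.
  have [Cs|Cs] := eqVneq (\sum_(h <- N | SJ J h) ch h) 0.
    rewrite Cs mulr0 big_seq_cond big1 // => h /andP[hN Sh].
    by rewrite (psum_seq_eq0 _ Cs hN Sh) ?mul0r // => u uN _; exact: chf_ge0.
  have Csp : 0 < \sum_(h <- N | SJ J h) ch h by rewrite lt_def Cs Cs0.
  have FrE : Fr G1 x J = ownf x [::] h0 * \sum_(h <- N | SJ J h) ch h.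
    rewrite Fr_eq mulr_sumr big_seq_cond [RHS]big_seq_cond; apply: eq_bigr => h /andP[hN Sh].
    by rewrite (rw x h hN Sh) mulrC.
  have Frp : 0 < Fr G1 x J by rewrite FrE mulr_gt0.
  have dt : dist (acts N h0) (tau J) by rewrite eJ; apply: vt.
  have := Hrat h0 p0; rewrite -eJ => /(_ Frp _ dt).
  rewrite eJ L_lin2 // -eJ FrE.
  have -> : \sum_(h <- N | SJ J h) reach G1 x h *
       \sum_(a in acts N h) (tau J a - x J a) * Q x h a =
       ownf x [::] h0 * \sum_(h <- N | SJ J h) ch h * D (tau J) h.
    rewrite mulr_sumr big_seq_cond [RHS]big_seq_cond; apply: eq_bigr => h /andP[hN Sh].
    rewrite (rw x h hN Sh) /D; ring.
  rewrite -mulf_div divff ?mul1r; last exact: lt0r_neq0.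
  by rewrite ler_pdivrMr.
rewrite -mulr_sumr -group_lab ler_wpM2l //.
rewrite -sum1_size natr_sum [X in _ <= X](bigID (p1node G)) /= -[X in X <= _]addr0.
apply: lerD.
  rewrite big_seq_cond [X in _ <= X]big_seq_cond; apply: ler_sum => h /andP[hN _].
  by have /andP[] := rf_bounds vt (g := [::]) hN.
by apply: sumr_ge0 => *; exact: ler01.
Qed.

End Game5.

End P5.
Import P5.

Module P6.
Set Implicit Arguments. Unset Strict Implicit. Unset Printing Implicit Defensive.
Local Open Scope ring_scope.
Local Open Scope classical_set_scope.

Section Game6.
Variables (A : finType) (I : eqType) (R : realType) (G : efg A I R).
Local Notation G1 := (pr1 G).
Local Notation N := (nodes G).
Local Notation lab := (@lab A I R G).
Local Notation Q := (@Q A I R G).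
Local Notation SJ := (@SJ A I R G).
Implicit Types (x y : I1 A I -> A -> R).

Lemma rf_cvg pik pi g r : converges G1 pik pi -> g ++ r \in N ->
  (fun k => reach_from G1 (pik k) g r) @ \oo --> reach_from G1 pi g r.
Proof.
move=> cv; elim: r g => [|a r IH] g H /=; first exact: cvg_cst.
have [nt aa] := cons_nonterm H.
have H' : rcons g a ++ r \in N by rewrite cat_rcons.
apply: cvgM; last exact: IH.
rewrite /step /=; case: ifP => o; last exact: cvg_cst.
have p : p1node G g by rewrite /p1node nt o.
exact: (cv g a p aa).
Qed.

Lemma U_cvg pik pi : converges G1 pik pi ->
  (fun k => U G1 (pik k)) @ \oo --> U G1 pi.
Proof.
move=> cv; rewrite /U; apply: cvg_sum_seq => z zN _.
apply: cvgM; last exact: cvg_cst.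
exact: (rf_cvg (g := [::]) cv).
Qed.

Lemma PI_Fr x J : PI G1 x J = Fr G1 x J.
Proof.
rewrite /PI /Fr; apply: eq_bigl => h /=.
rewrite /first_in (p1node_pr1 G h).
case ph: (p1node G h) => //=.
case: eqP => //= e.
apply/forallP => i; apply/negP => /andP[pi /eqP ei].
have := @take_lt_obs A I R G h i (ltn_ord i) pi.
by rewrite -e in ei; case: ei => _ ->; rewrite ltnn.
Qed.

Lemma rational_opt pi' : EDT_rational G1 pi' \/ CDT_rational G1 pi' ->
  forall tau, valid G1 tau -> U G1 tau <= U G1 pi'.
Proof.
have gen : forall (pik : nat -> I1 A I -> A -> R) (eps : nat -> R),
   (forall k, fully_mixed G1 (pik k)) -> (forall k, 0 < eps k) -> eps @ \oo --> (0:R) ->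
   converges G1 pik pi' ->
   (forall k h0, p1node G h0 -> 0 < Fr G1 (pik k) (lab h0) -> forall s, dist (acts N h0) s ->
     (U G1 (subst (pik k) (lab h0) s) - U G1 (pik k)) / Fr G1 (pik k) (lab h0) <= eps k) ->
   forall tau, valid G1 tau -> U G1 tau <= U G1 pi'.
  move=> pik eps fm ep ec cv Hr tau vt.
  have H : forall k, U G1 tau <= U G1 (pik k) + eps k * (size N)%:R.
    move=> k; have := ratR (fm k) vt (ltW (ep k)) (Hr k); lra.
  apply: (cvg_ge_lim _ H).
  rewrite -[X in _ --> X]addr0 -[X in _ --> _ + X](mul0r (size N)%:R).
  apply: cvgD; first exact: U_cvg.
  by apply: cvgM => //; exact: cvg_cst.
move=> [[pik [eps [fm ep ec cv Hr]]]|[pik [eps [fm ep ec cv Hr]]]].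
- apply: (gen pik eps) => // k h0 p0 Fp s ds.
  by have := Hr k h0 p0; rewrite !PI_Fr => /(_ Fp s ds).
- apply: (gen pik eps) => // k h0 p0 Fp s ds.
  by have := Hr k h0 p0 Fp s ds; rewrite /= UCDT_eq.
Qed.

End Game6.

End P6.
Import P6.

Module P7.
Set Implicit Arguments. Unset Strict Implicit. Unset Printing Implicit Defensive.
Local Open Scope ring_scope.

Lemma sum_ind (A : finType) (R : realType) (S : {set A}) (b : A) (F : A -> R) :
  b \in S -> \sum_(a in S) (a == b)%:R * F a = F b.
Proof.
move=> bS; rewrite (bigD1 b) //= eqxx mul1r big1 ?addr0 // => a /andP[_ /negbTE ->].
by rewrite mul0r.
Qed.

Lemma argmax_seq (T : eqType) (R : realType) (f : T -> R) (s : seq T) :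
  s != [::] -> exists2 t, t \in s & forall t', t' \in s -> f t' <= f t.
Proof.
elim: s => // t s IH _.
case: (eqVneq s [::]) => [->|sn].
  by exists t => [|t']; rewrite ?inE ?eqxx // => /eqP ->.
have [u us Hu] := IH sn.
case: (leP (f t) (f u)) => H.
  exists u; first by rewrite inE us orbT.
  by move=> t'; rewrite inE => /orP[/eqP->//|]; apply: Hu.
exists t; first by rewrite inE eqxx.
move=> t'; rewrite inE => /orP[/eqP->//|/Hu] Ht; exact: (le_trans Ht (ltW H)).
Qed.

Lemma argmax_fin (T : finType) (R : realType) (f : T -> R) (t0 : T) :
  exists t : T, forall t', f t' <= f t.
Proof.
have : enum T != [::] by apply/eqP => e; have := mem_enum T t0; rewrite e.
move=> /(argmax_seq f) [t _ H]; exists t => t'; apply: H; by rewrite mem_enum.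
Qed.

Section Game7.
Variables (A : finType) (I : eqType) (R : realType) (G : efg A I R).
Local Notation G1 := (pr1 G).
Local Notation N := (nodes G).
Local Notation lab := (@lab A I R G).
Local Notation Q := (@Q A I R G).
Local Notation SJ := (@SJ A I R G).
Local Notation C := (@C A I R G).
Local Notation Usum := (@Usum A I R G).
Implicit Types (x y : I1 A I -> A -> R).

Definition P1l := [seq h <- N | p1node G h].
Definition msz := size P1l.
Definition idx (J : I1 A I) := index J (map lab P1l).
Definition rep (J : I1 A I) := nth [::] P1l (idx J).
Definition actsJ (J : I1 A I) := acts N (rep J).

Lemma rep_facts h : p1node G h ->
  [/\ (idx (lab h) < msz)%N, lab (rep (lab h)) = lab h, p1node G (rep (lab h)) &
      actsJ (lab h) = acts N h].
Proof.
move=> ph.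
have hN : h \in N by move: ph => /andP[/andP[]].
have lm : lab h \in map lab P1l by apply: map_f; rewrite mem_filter ph.
have il : (idx (lab h) < msz)%N by rewrite /idx /msz -(size_map lab) index_mem.
have rl : lab (rep (lab h)) = lab h.
  by rewrite /rep -(nth_map [::] (lab [::])) // nth_index.
have rp : p1node G (rep (lab h)).
  by have := mem_nth [::] il; rewrite mem_filter => /andP[].
split => //; rewrite /actsJ; exact: acts_lab.
Qed.

Lemma idx_inj J L : (idx J < msz)%N -> idx L = idx J -> L = J.
Proof.
move=> Jm e.
have Jin : J \in map lab P1l by rewrite -index_mem size_map.
have Lin : L \in map lab P1l.
  by rewrite -index_mem size_map; move: Jm; rewrite -e /idx /msz.
move: e; rewrite /idx => e.
by rewrite -(nth_index (lab [::]) Jin) -[in LHS](nth_index (lab [::]) Lin) e.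
Qed.

Definition Prof := {ffun 'I_msz -> A}.

Definition eff (s : Prof) (J : I1 A I) : option A :=
  if insub (idx J) is Some i then
    (let b := s i in if b \in actsJ J then Some b else Some (odflt b [pick c in actsJ J]))
  else None.

Definition strat (s : Prof) (d : R) (J : I1 A I) (a : A) : R :=
  if a \in actsJ J then
    (if eff s J is Some e then d + (1 - #|actsJ J|%:R * d) * (a == e)%:R else 0)
  else 0.

Lemma eff_p1 s h : p1node G h -> exists2 e, eff s (lab h) = Some e & e \in acts N h.
Proof.
move=> ph; have [il _ _ aJ] := rep_facts ph.
rewrite /eff insubT /=; case: ifP => bin.
  by exists (s (Ordinal il)) => //; rewrite -aJ.
case: pickP => [c cin|H]; first by exists c => //; rewrite -aJ.
exfalso; move: ph => /andP[/andP[_ ne] _].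
move/set0Pn: ne => [c cin]; have := H c; by rewrite aJ cin.
Qed.

Lemma strat_val s d h a : p1node G h -> forall e, eff s (lab h) = Some e ->
  strat s d (lab h) a = if a \in acts N h then d + (1 - #|acts N h|%:R * d) * (a == e)%:R else 0.
Proof.
move=> ph e ee; have [_ _ _ aJ] := rep_facts ph.
by rewrite /strat aJ ee.
Qed.

Lemma card_le (S : {set A}) : #|S|%:R <= #|A|%:R :> R.
Proof. by rewrite ler_nat max_card. Qed.

Lemma strat_valid s d : 0 <= d -> #|A|%:R * d <= 1 -> valid G1 (strat s d).
Proof.
move=> d0 d1 h ph; have [e ee ea] := eff_p1 s ph.
have n1 : #|acts N h|%:R * d <= 1.
  apply: le_trans d1; apply: ler_wpM2r => //; exact: card_le.
split.
  move=> a aa; rewrite (strat_val _ _ ph ee) aa.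
  apply: addr_ge0 => //; apply: mulr_ge0; [by rewrite subr_ge0|exact: ler0n].
rewrite (eq_bigr (fun a => d + (1 - #|acts N h|%:R * d) * (a == e)%:R)); last first.
  by move=> a aa; rewrite (strat_val _ _ ph ee) aa.
rewrite big_split /= sumr_const.
rewrite (eq_bigr (fun a => (a == e)%:R * (1 - #|acts N h|%:R * d))); last by move=> a _; rewrite mulrC.
rewrite sum_ind // -mulr_natl; ring.
Qed.

Lemma strat_fm s d : 0 < d -> #|A|%:R * d < 1 -> fully_mixed G1 (strat s d).
Proof.
move=> d0 d1; split; first by apply: strat_valid; [exact: ltW|exact: ltW].
move=> h a ph aa; have [e ee ea] := eff_p1 s ph.
rewrite /= (strat_val _ _ ph ee) aa.
have n1 : #|acts N h|%:R * d < 1.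
  apply: le_lt_trans d1; apply: ler_wpM2r; [exact: ltW|exact: card_le].
apply: ltr_wpDr => //; apply: mulr_ge0; [by rewrite subr_ge0 ltW|exact: ler0n].
Qed.

Definition swap (s : Prof) (i0 : 'I_msz) (b : A) : Prof := [ffun i => if i == i0 then b else s i].

Lemma swap_other s d h0 (b : A) : forall (il : (idx (lab h0) < msz)%N) L, L != lab h0 ->
  strat (swap s (Ordinal il) b) d L = strat s d L.
Proof.
move=> il L LJ; rewrite /strat /eff.
case: insubP => [i _ vi|_] //.
rewrite /swap ffunE; case: eqP => // e.
by move: LJ; rewrite (idx_inj il (L := L)) ?eqxx // -vi e.
Qed.

Lemma swap_self s d h0 b : p1node G h0 -> b \in acts N h0 ->
  forall (il : (idx (lab h0) < msz)%N) a,
  strat (swap s (Ordinal il) b) d (lab h0) a =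
   if a \in acts N h0 then d + (1 - #|acts N h0|%:R * d) * (a == b)%:R else 0.
Proof.
move=> p0 bb il a.
apply: strat_val => //.
have [_ _ _ aJ] := rep_facts p0.
rewrite /eff insubT /swap ffunE eqxx aJ bb //.
Qed.

Lemma best_bound s d h0 sd : 0 < d -> #|A|%:R * d < 1 ->
  (forall s', U G1 (strat s' d) <= U G1 (strat s d)) -> p1node G h0 ->
  dist (acts N h0) sd ->
  U G1 (subst (strat s d) (lab h0) sd) - U G1 (strat s d) <=
    #|A|%:R * d * Usum * Fr G1 (strat s d) (lab h0).
Proof.
move=> d0 d1 best p0 dsd.
set x := strat s d; set J := lab h0.
have vx : valid G1 x by apply: strat_valid; [exact: ltW|exact: ltW].
have [e ee ea] := eff_p1 s p0.
have [il _ _ _] := rep_facts p0.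
pose n : R := #|acts N h0|%:R.
have n1 : n * d < 1.
  apply: le_lt_trans d1; apply: ler_wpM2r; [exact: ltW|exact: card_le].
have xJ : forall a, a \in acts N h0 -> x J a = d + (1 - n * d) * (a == e)%:R.
  by move=> a aa; rewrite /x /J (strat_val _ _ p0 ee) aa.
have C0 : forall a, 0 <= C x J a.
  move=> a; rewrite /P4.C big_seq_cond; apply: sumr_ge0 => h /andP[hN _].
  apply: mulr_ge0; last exact: Q_ge0.
  by have /andP[] := rf_bounds vx (g := [::]) hN.
have loc : forall b, b \in acts N h0 -> C x J b <= C x J e.
  move=> b bb.
  have := best (swap s (Ordinal il) b).
  have -> : U G1 (strat (swap s (Ordinal il) b) d) =
            U G1 (subst x J (strat (swap s (Ordinal il) b) d J)).
    apply: U_eqall => g pg; rewrite /subst; case: eqP => [->//|/eqP ne].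
    by rewrite swap_other.
  rewrite -subr_le0 L_lin //.
  rewrite (eq_bigr (fun a => (1 - n * d) * ((a == b)%:R * C x J a - (a == e)%:R * C x J a))); last first.
    move=> a aa; rewrite swap_self // aa xJ //; ring.
  rewrite -mulr_sumr sumrB !sum_ind // pmulr_rle0 ?subr_gt0 //.
  by rewrite subr_le0.
rewrite L_lin //.
rewrite (eq_bigr (fun a => sd a * C x J a - (d * C x J a + (1 - n * d) * ((a == e)%:R * C x J a)))); last first.
  move=> a aa; rewrite xJ //; ring.
rewrite sumrB big_split /= -mulr_sumr -mulr_sumr sum_ind //.
have S1 : \sum_(a in acts N h0) sd a * C x J a <= C x J e.
  apply: (@le_trans _ _ (\sum_(a in acts N h0) sd a * C x J e)).
    apply: ler_sum => a aa; apply: ler_wpM2l; [exact: (proj1 dsd)|exact: loc].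
  by rewrite -mulr_suml (proj2 dsd) mul1r.
have S2 : 0 <= d * \sum_(a in acts N h0) C x J a.
  by apply: mulr_ge0; [exact: ltW|apply: sumr_ge0 => a _; exact: C0].
have S3 : C x J e <= Usum * Fr G1 x J.
  rewrite Fr_eq mulr_sumr /P4.C big_seq_cond [X in _ <= X]big_seq_cond.
  apply: ler_sum => h /andP[hN _]; rewrite mulrC; apply: ler_wpM2r; last exact: Q_le.
  by have /andP[] := rf_bounds vx (g := [::]) hN.
have nA : n <= #|A|%:R by exact: card_le.
have Ce0 := C0 e.
have Us0 : 0 <= Usum * Fr G1 x J by apply: le_trans S3.
have : n * d * C x J e <= #|A|%:R * d * (Usum * Fr G1 x J).
  apply: ler_pM; [apply: mulr_ge0; [exact: ler0n|exact: ltW] | exact: Ce0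
    | apply: ler_wpM2r => //; exact: ltW | exact: S3].
rewrite -!mulrA; nra.
Qed.

End Game7.

End P7.
Import P7.

Module P8.
Set Implicit Arguments. Unset Strict Implicit. Unset Printing Implicit Defensive.
Local Open Scope ring_scope.
Local Open Scope classical_set_scope.

Section Game8.
Variables (A : finType) (I : eqType) (R : realType) (G : efg A I R).
Local Notation G1 := (pr1 G).
Local Notation N := (nodes G).
Local Notation lab := (@lab A I R G).
Local Notation Q := (@Q A I R G).
Local Notation SJ := (@SJ A I R G).
Local Notation C := (@C A I R G).
Local Notation Usum := (@Usum A I R G).
Local Notation Prof := (@Prof A I R G).
Local Notation strat := (@strat A I R G).
Implicit Types (x y : I1 A I -> A -> R).

Definition dseq (k : nat) : R := ((k + #|A|).+1)%:R^-1.

Lemma dseq_gt0 k : 0 < dseq k.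
Proof. by rewrite /dseq invr_gt0 ltr0n. Qed.

Lemma dseq_lt1 k : #|A|%:R * dseq k < 1.
Proof.
rewrite /dseq -[_ * _^-1]/(_ / _) ltr_pdivrMr ?ltr0n // mul1r ltr_nat ltnS.
exact: leq_addl.
Qed.

Lemma Usum_ge0 : 0 <= Usum.
Proof. by rewrite /P2.Usum big_seq_cond; apply: sumr_ge0 => z /andP[_ lz]; exact: util_ge0. Qed.

Lemma U_ge0 x : valid G1 x -> 0 <= U G1 x.
Proof.
move=> vx; rewrite /U big_seq_cond; apply: sumr_ge0 => z /andP[zN lz].
apply: mulr_ge0; last exact: util_ge0.
by have /andP[] := rf_bounds vx (g := [::]) zN.
Qed.

Lemma subst_valid x h s : valid G1 x -> p1node G h -> dist (acts N h) s ->
  valid G1 (subst x (lab h) s).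
Proof.
move=> vx ph ds g pg; rewrite /subst /=; case: eqP => [e|_]; last exact: vx.
by rewrite (@acts_lab A I R G g h).
Qed.

Lemma prof_ne : exists t0 : Prof, True.
Proof.
case: (posnP (@msz A I R G)) => [e|mp].
  by exists (ffun0 (etrans (card_ord _) e)).
have : nth [::] (@P1l A I R G) 0 \in @P1l A I R G by apply: mem_nth.
rewrite mem_filter => /andP[/andP[/andP[_ ne] _] _].
by move/set0Pn: ne => [a _]; exists [ffun => a].
Qed.

Lemma best_ex d : exists s : Prof, forall s', U G1 (strat s' d) <= U G1 (strat s d).
Proof. have [t0 _] := prof_ne; exact: argmax_fin. Qed.

Lemma exists_opt : exists pis,
  [/\ valid G1 pis, EDT_rational G1 pis, CDT_rational G1 pis &
      forall tau, valid G1 tau -> U G1 tau <= U G1 pis].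
Proof.
have [best Hbest] := choice (fun k => best_ex (dseq k)).
have [ss Hss] : exists ss, forall j, exists k, (j <= k)%N /\ best k = ss.
  apply: contrapT => H.
  have H2 : forall s, exists j, forall k, (j <= k)%N -> best k != s.
    move=> s; apply: contrapT => Hn; apply: H; exists s => j; apply: contrapT => Hk.
    apply: Hn; exists j => k jk; apply/negP => /eqP E; apply: Hk; by exists k.
  have [jf Hjf] := choice H2.
  pose KK := \max_(s : {ffun 'I_(@msz A I R G) -> A}) jf s.
  have := Hjf (best KK) KK (@leq_bigmax _ jf (best KK)).
  by rewrite eqxx.
have [g Hg] := choice Hss.
pose pik j := strat ss (dseq (g j)).
pose K := #|A|%:R * Usum + 1.
have K0 : 0 < K.
  have U0 := Usum_ge0; have A0 : 0 <= #|A|%:R :> R by exact: ler0n.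
  rewrite /K; nra.
pose eps j := dseq (g j) * K.
pose pis := strat ss 0.
have vpis : valid G1 pis by apply: strat_valid; rewrite ?mulr0 ?ler01.
have Hd : (fun j => dseq (g j)) @ \oo --> (0:R).
  apply: (@squeeze_cvgr _ _ _ _ (fun _ => 0) (fun j => harmonic j)); last exact: cvg_harmonic.
    apply: nearW => j; rewrite (ltW (dseq_gt0 _)) /=.
    rewrite /dseq lef_pV2 ?posrE ?ltr0n // ler_nat ltnS.
    by apply: leq_trans (proj1 (Hg j)) (leq_addr _ _).
  exact: cvg_cst.
have fm : forall j, fully_mixed G1 (pik j) by move=> j; apply: strat_fm; [exact: dseq_gt0|exact: dseq_lt1].
have ep : forall j, 0 < eps j by move=> j; apply: mulr_gt0 => //; exact: dseq_gt0.
have ec : eps @ \oo --> (0:R).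
  rewrite -(mul0r K); apply: cvgM => //; exact: cvg_cst.
have cv : converges G1 pik pis.
  move=> h a ph aa; have [e ee ea] := @eff_p1 A I R G ss h ph.
  rewrite /pis /pik /= (@strat_val A I R G ss 0 h a ph e ee) aa.
  under eq_fun => j do rewrite (@strat_val A I R G ss _ h a ph e ee) aa.
  apply: cvgD => //; apply: cvgM; last exact: cvg_cst.
  apply: cvgB; first exact: cvg_cst.
  by apply: cvgM => //; exact: cvg_cst.
have Hr : forall j h0, p1node G h0 -> 0 < Fr G1 (pik j) (lab h0) -> forall s, dist (acts N h0) s ->
     (U G1 (subst (pik j) (lab h0) s) - U G1 (pik j)) / Fr G1 (pik j) (lab h0) <= eps j.
  move=> j h0 p0 Fp s ds.
  rewrite ler_pdivrMr //.
  have bb : forall s', U G1 (strat s' (dseq (g j))) <= U G1 (strat ss (dseq (g j))).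
    by rewrite -(proj2 (Hg j)); apply: Hbest.
  apply: le_trans (best_bound (dseq_gt0 _) (dseq_lt1 _) bb p0 ds) _.
  rewrite /eps /K; have := dseq_gt0 (g j); have := Usum_ge0; nra.
have EDTr : EDT_rational G1 pis.
  exists pik, eps; split => // k h ph Pp s ds.
  move: Pp; rewrite /= !PI_Fr => Pp; exact: Hr.
have CDTr : CDT_rational G1 pis.
  exists pik, eps; split => // k h ph Fp s ds.
  rewrite /= (UCDT_eq (pik k) s ph); exact: Hr.
exists pis; split => //.
exact: (rational_opt (or_introl EDTr)).
Qed.

End Game8.

End P8.
Import P8.

Module P9.
Set Implicit Arguments. Unset Strict Implicit. Unset Printing Implicit Defensive.
Local Open Scope ring_scope.
Local Open Scope classical_set_scope.

Lemma sup_bounds (R : realType) (E : set R) (M : R) :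
  (forall r, E r -> 0 <= r <= M) -> 0 <= M -> 0 <= sup E <= M.
Proof.
move=> H M0; case: (pselect (E !=set0)) => [ne|e].
  have [r Er] := ne.
  have ub : ubound E M by move=> y /H /andP[].
  apply/andP; split; last exact: ge_sup.
  have /andP[r0 _] := H r Er.
  apply: le_trans r0 _; apply: ub_le_sup => //; by exists M.
have -> : E = set0 by apply/seteqP; split => r Er //; apply: e; exists r.
by rewrite sup0 lexx.
Qed.

Lemma inf_bounds (R : realType) (E : set R) (M : R) :
  (forall r, E r -> 0 <= r <= M) -> 0 <= M -> 0 <= inf E <= M.
Proof.
move=> H M0; case: (pselect (E !=set0)) => [ne|e].
  have [r Er] := ne.
  have lb : lbound E 0 by move=> y /H /andP[].
  apply/andP; split; first exact: lb_le_inf.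
  have /andP[_ rM] := H r Er.
  apply: le_trans rM; apply: ge_inf => //; by exists 0.
have -> : E = set0 by apply/seteqP; split => r Er //; apply: e; exists r.
by rewrite inf0 lexx.
Qed.

Section Game9.
Variables (A : finType) (I : eqType) (R : realType) (G : efg A I R).
Local Notation G1 := (pr1 G).
Local Notation N := (nodes G).
Local Notation lab := (@lab A I R G).
Implicit Types (x y : I1 A I -> A -> R).

Lemma L_linD x h0 s : p1node G h0 ->
  U G1 (subst x (lab h0) s) - U G1 x =
  \sum_(a in acts N h0) (s a - x (lab h0) a) * dU G1 x (lab h0) a.
Proof. by move=> p0; rewrite L_lin //; apply: eq_bigr => a aa; rewrite dU_eq. Qed.

Lemma opt_eq pis : valid G1 pis -> (forall tau, valid G1 tau -> U G1 tau <= U G1 pis) ->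
  EDT_eq G1 pis /\ CDT_eq G1 pis.
Proof.
move=> vp Hopt; split.
  split => // h ph s ds; apply: Hopt; exact: subst_valid.
split => //.
have per : forall J : I1 A I, exists p : R * (A -> R), forall h, p1node G h -> lab h = J ->
   forall a, a \in acts N h -> [/\ 0 <= p.2 a, p.2 a * pis J a = 0 &
                                 dU G1 pis J a + p.2 a - p.1 = 0].
  move=> J; case: (pselect (exists h0, p1node G h0 /\ lab h0 = J)) => [[h0 [p0 e0]]|nh]; last first.
    by exists (0, fun _ => 0) => h ph lh; exfalso; apply: nh; exists h.
  rewrite -e0.
  pose D a := dU G1 pis (lab h0) a.
  have ne : enum (acts N h0) != [::].
    move: p0 => /andP[/andP[_ /set0Pn [c cin]] _].
    by apply/eqP => e; have := mem_enum (acts N h0) c; rewrite e cin.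
  have [b bin Hb] := argmax_seq D ne.
  rewrite mem_enum in bin.
  exists (D b, fun a => D b - D a) => h ph lh a aa /=.
  have aa0 : a \in acts N h0 by rewrite -(acts_lab ph p0 lh).
  split; last by rewrite /D; ring.
    by rewrite subr_ge0; apply: Hb; rewrite mem_enum.
  have dpt : dist (acts N h0) (fun a => (a == b)%:R : R).
    split; first by move=> *; exact: ler0n.
    rewrite (eq_bigr (fun a => (a == b)%:R * 1)); last by move=> *; rewrite mulr1.
    by rewrite sum_ind.
  have := Hopt _ (subst_valid vp p0 dpt).
  rewrite -subr_le0 L_linD //.
  have [pp0 pp1] := vp h0 p0.
  have -> : \sum_(a in acts N h0) ((a == b)%:R - pis (lab h0) a) * dU G1 pis (lab h0) a =
            \sum_(a in acts N h0) pis (lab h0) a * (D b - D a).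
    rewrite [LHS](eq_bigr (fun a => (a == b)%:R * D a - pis (lab h0) a * D a)); last first.
      by move=> *; rewrite /D /=; ring.
    rewrite [X in _ = X](eq_bigr (fun a => pis (lab h0) a * D b - pis (lab h0) a * D a)); last first.
      by move=> *; rewrite /D /=; ring.
    by rewrite !sumrB sum_ind // -mulr_suml pp1 mul1r.
  move=> S0.
  have T0 : forall a, a \in acts N h0 -> 0 <= pis (lab h0) a * (D b - D a).
    by move=> c cc; apply: mulr_ge0; [exact: pp0|rewrite subr_ge0; apply: Hb; rewrite mem_enum].
  have S00 : \sum_(a in acts N h0) pis (lab h0) a * (D b - D a) = 0.
    by apply/le_anti; rewrite S0 sumr_ge0.
  by rewrite mulrC; apply: (psumr_eq0P T0 S00).
have [f Hf] := choice per.
exists (fun J => (f J).1), (fun J => (f J).2) => h ph a aa.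
exact: (Hf (lab h) h ph erefl a aa).
Qed.

Lemma U_re x y : realization_equiv G1 x y -> U G1 x = U G1 y.
Proof.
move=> re; rewrite /U big_seq_cond [RHS]big_seq_cond; apply: eq_bigr => z /andP[zN _].
by rewrite re.
Qed.

End Game9.


End P9.
Import P9.

Local Open Scope ring_scope.
Local Open Scope classical_set_scope.

Theorem corollary2 (A : finType) (I : eqType) (R : realType)
  (G : efg A I R) (c : SC) :
  (1 <= VoR c G)%E.
Proof.
have [pis [vp Er Cr Hopt]] := exists_opt G.
have [HE HC] := opt_eq vp Hopt.
set OPT := U (pr1 G) pis.
have OPT0 : 0 <= OPT := U_ge0 vp.
have valsC : eq_values (pr1 G) (fun G' pi => CDT_Nash G' pi) = [set OPT].
  apply/seteqP; split => r.
    move=> [pi [[[vpi _] [pi' [re rat]]] <-]] /=.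
    apply/le_anti; rewrite Hopt //= (U_re re).
    exact: (rational_opt (or_intror rat)).
  move=> /= ->; exists pis; split => //; split => //; exists pis; split => //.
have valsE : eq_values (pr1 G) (fun G' pi => EDT_Nash G' pi) = [set OPT].
  apply/seteqP; split => r.
    move=> [pi [[[vpi _] [pi' [re rat]]] <-]] /=.
    apply/le_anti; rewrite Hopt //= (U_re re).
    exact: (rational_opt (or_introl rat)).
  move=> /= ->; exists pis; split => //; split => //; exists pis; split => //.
have Gb : forall pi : I -> A -> R, valid G pi -> 0 <= U G pi <= OPT.
  move=> pi vpi.
  pose pif := fun J : I1 A I => pi J.1.
  have vf : valid (pr1 G) pif by move=> h ph; exact: vpi h ph.
  have rfe : forall g r, reach_from G pi g r = reach_from (pr1 G) pif g r.
    by move=> g r; elim: r g => [|a r IH] g //=; rewrite IH.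
  have -> : U G pi = U (pr1 G) pif.
    by rewrite /U /=; apply: eq_bigr => z _; rewrite /reach rfe.
  by rewrite U_ge0 // Hopt.
have GbC : forall r, eq_values G (fun G' pi => CDT_Nash G' pi) r -> 0 <= r <= OPT.
  by move=> r [pi [[[vpi _] _] <-]]; apply: Gb.
have GbE : forall r, eq_values G (fun G' pi => EDT_Nash G' pi) r -> 0 <= r <= OPT.
  by move=> r [pi [[[vpi _] _] <-]]; apply: Gb.
have /andP[b0 bO] : 0 <= sc_value c G <= OPT.
  case: c; rewrite /sc_value.
  - exact: inf_bounds.
  - exact: sup_bounds.
  - exact: inf_bounds.
  - exact: sup_bounds.
have Ha : sc_value c (pr1 G) = OPT.
  by clear b0 bO; case: c; rewrite /sc_value ?valsC ?valsE ?inf1 ?sup1.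
rewrite /VoR /= Ha.
case: eqP => [_|/eqP bn].
  by case: eqP => _; [exact: lexx|exact: leey].
rewrite lee_fin ler_pdivlMr ?mul1r //.
by rewrite lt_def bn b0.
Qed.
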